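(* Let $d\ge2$. Let $\Omega\subset\mathbb{R}^d_+$ be open and bounded and satisfy the cone condition: for every $x\in\partial\Omega$ there exist a cone $\mathcal{K}_x$ with nonempty interior and a neighborhood $V_x$ of $x$ such that $y\in V_x\setminus\Omega$ implies $(y+\mathcal{K}_x)\cap\overline{\Omega}\cap V_x\subset\{y\}$. Let $f:\mathbb{R}^d_+\to[0,\infty)$ satisfy: there is a continuous nondecreasing $m:[0,\infty)\to[0,\infty)$ with $m(0)=0$ and $|f(x)-f(y)|\le m(|x-y|)$ for $x,y\in\Omega$, and $f(x)=0$ for $x\notin\Omega$. Let $u,v:\overline{\mathbb{R}^d_+}\to\mathbb{R}$ be continuous, with $u$ a viscosity subsolution and $v$ a viscosity supersolution of \[u_{x_1}\cdots u_{x_d}=f\quad\text{on }\mathbb{R}^d_+,\] and assume $u$ is truncatable and $v$ is Pareto-monotone. If $u\le v$ on $\partial\mathbb{R}^d_+$, then $u\le v$ on $\mathbb{R}^d_+$.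
   Context: $\mathbb{R}^d_+=\{x:x_i>0\ \forall i\}$; $x\leqq y$ means $x_i\le y_i$ for all $i$. $v$ is Pareto-monotone if $x\leqq y$ implies $v(x)\le v(y)$. For bounded $g$, $g^*(x)=\limsup_{r\searrow0}\sup\{g(y):|y-x|\le r\}$ and $g_*=-(-g)^*$. Superdifferential $D^+u(x)$: all $p$ with $u(y)\le u(x)+\langle p,y-x\rangle+o(|y-x|)$ as $y\to x$; subdifferential $D^-u(x)$ with $\ge$. A continuous $u$ is a viscosity subsolution of $u_{x_1}\cdots u_{x_d}=g$ on $\mathbb{R}^d_+$ if $p_1\cdots p_d\le g^*(x)$ for all $x\in\mathbb{R}^d_+$, $p\in D^+u(x)$; a supersolution if $p_1\cdots p_d\ge g_*(x)$ for all $p\in D^-u(x)$. A viscosity subsolution $u$ of $u_{x_1}\cdots u_{x_d}=f$ is truncatable if for every $z\in\mathbb{R}^d_+$, the function $\tilde u(x)=u(\min(x_1,z_1),\dots,\min(x_d,z_d))$ is a viscosity subsolution of $\tilde u_{x_1}\cdots\tilde u_{x_d}=\hat f$ on $\mathbb{R}^d_+$, where $\hat f(x)=f^*(x)$ if $x\leqq z$ and $\hat f(x)=0$ otherwise. *)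

(* Defs.v *)
From HB Require Import structures.
From mathcomp Require Import all_boot all_order all_algebra.
From mathcomp Require Import boolp classical_sets reals.
Set Implicit Arguments. Unset Strict Implicit. Unset Printing Implicit Defensive.
Import Order.TTheory GRing.Theory Num.Theory.
Local Open Scope classical_set_scope.
Local Open Scope ring_scope.

Section Defs.
Variables (R : realType) (d : nat).
Definition vec := 'I_d -> R.

Definition enorm (x : vec) : R := Num.sqrt (\sum_(i < d) x i ^+ 2).
Definition vsub (x y : vec) : vec := fun i => x i - y i.
Definition vadd (x y : vec) : vec := fun i => x i + y i.
Definition vscale (t : R) (x : vec) : vec := fun i => t * x i.
Definition dot (p x : vec) : R := \sum_(i < d) p i * x i.
Definition dist (x y : vec) : R := enorm (vsub x y).

Definition posorth : set vec := [set x | forall i, 0 < x i].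
Definition cposorth : set vec := [set x | forall i, 0 <= x i].
Definition bdposorth : set vec := [set x | cposorth x /\ exists i, x i = 0].

Definition vle (x y : vec) : Prop := forall i, x i <= y i.

Definition vmin (x z : vec) : vec := fun i => Num.min (x i) (z i).

Definition ball_ (x : vec) (r : R) : set vec := [set y | dist y x < r].
Definition is_open (A : set vec) : Prop :=
  forall x, A x -> exists2 r : R, 0 < r & ball_ x r `<=` A.
Definition is_bounded (A : set vec) : Prop :=
  exists M : R, forall x, A x -> enorm x <= M.
Definition clos (A : set vec) : set vec :=
  [set x | forall r : R, 0 < r -> exists y, A y /\ dist y x < r].
Definition bdry (A : set vec) : set vec := clos A `\` A.
Definition is_nbhd (x : vec) (V : set vec) : Prop :=
  exists2 r : R, 0 < r & ball_ x r `<=` V.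
Definition interior_ (A : set vec) : set vec := [set x | is_nbhd x A].

Definition is_cone (K : set vec) : Prop :=
  forall k t, K k -> 0 <= t -> K (vscale t k).

Definition cone_condition (Om : set vec) : Prop :=
  forall x, bdry Om x ->
    exists K V, [/\ is_cone K, interior_ K !=set0, is_nbhd x V &
      forall y, V y -> ~ Om y ->
        forall w, (exists k, K k /\ w = vadd y k) -> clos Om w -> V w -> w = y].

(* upper semicontinuous envelope g^*(x) = limsup_{r -> 0+} sup_{|y-x|<=r} g(y)
   (for bounded g, the sup being nondecreasing in r, this is the infimum over r > 0);
   y ranges over the domain R^d_+ of g. *)
Definition usc_env (g : vec -> R) (x : vec) : R :=
  inf [set sup [set g y | y in [set y | posorth y /\ dist y x <= r]] | r in [set r : R | 0 < r]].
Definition lsc_env (g : vec -> R) (x : vec) : R :=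
  - usc_env (fun y => - g y) x.

Definition superdiff (u : vec -> R) (x p : vec) : Prop :=
  forall eps : R, 0 < eps -> exists2 del : R, 0 < del &
    forall y, posorth y -> dist y x < del ->
      u y <= u x + dot p (vsub y x) + eps * dist y x.
Definition subdiff (u : vec -> R) (x p : vec) : Prop :=
  forall eps : R, 0 < eps -> exists2 del : R, 0 < del &
    forall y, posorth y -> dist y x < del ->
      u y >= u x + dot p (vsub y x) - eps * dist y x.

Definition visc_sub (g u : vec -> R) : Prop :=
  forall x p, posorth x -> superdiff u x p -> \prod_(i < d) p i <= usc_env g x.
Definition visc_super (g v : vec -> R) : Prop :=
  forall x p, posorth x -> subdiff v x p -> \prod_(i < d) p i >= lsc_env g x.

Definition cont_on (A : set vec) (u : vec -> R) : Prop :=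
  forall x, A x -> forall eps : R, 0 < eps -> exists2 del : R, 0 < del &
    forall y, A y -> dist y x < del -> `|u y - u x| < eps.

Definition pareto_monotone (v : vec -> R) : Prop :=
  forall x y, cposorth x -> cposorth y -> vle x y -> v x <= v y.

Definition fhat (f : vec -> R) (z : vec) (x : vec) : R :=
  if `[< vle x z >] then usc_env f x else 0.

Definition truncatable (f u : vec -> R) : Prop :=
  forall z, posorth z -> visc_sub (fhat f z) (fun x => u (vmin x z)).

End Defs.

Definition is_modulus (R : realType) (m : R -> R) : Prop :=
  [/\ m 0 = 0,
      (forall r, 0 <= r -> 0 <= m r),
      (forall r s, 0 <= r -> r <= s -> m r <= m s) &
      (forall r, 0 <= r -> forall eps : R, 0 < eps -> exists2 del : R, 0 < del &
         forall s, 0 <= s -> `|s - r| < del -> `|m s - m r| < eps)].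

(* Main.v *)
Require Import Defs.
From HB Require Import structures.
From mathcomp Require Import all_boot all_order all_algebra.
From mathcomp Require Import boolp classical_sets reals topology normedtype derive.
From mathcomp Require Import ring lra.
Import Order.TTheory GRing.Theory Num.Theory.
Import numFieldNormedType.Exports.
Local Open Scope classical_set_scope.
Local Open Scope ring_scope.
Set Implicit Arguments. Unset Strict Implicit. Unset Printing Implicit Defensive.

Section Basics.
Variables (R : realType) (n : nat).
Implicit Types (x y a h : vec R n).

Definition ss x : R := \sum_(i < n) x i ^+ 2.

Lemma ss_ge0 x : 0 <= ss x.
Proof. by apply: sumr_ge0 => i _; rewrite sqr_ge0. Qed.

Lemma ss_ext x y : (forall i, x i = y i) -> ss x = ss y.
Proof. by move=> e; apply: eq_bigr => i _; rewrite e. Qed.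

Lemma enormE x : enorm x = Num.sqrt (ss x).
Proof. by []. Qed.

Lemma enorm_ge0 x : 0 <= enorm x.
Proof. exact: sqrtr_ge0. Qed.

Lemma enorm_sqr x : enorm x ^+ 2 = ss x.
Proof. by rewrite enormE sqr_sqrtr // ss_ge0. Qed.

Lemma enorm_ext x y : (forall i, x i = y i) -> enorm x = enorm y.
Proof. by move=> e; rewrite !enormE (ss_ext e). Qed.

Lemma sqr_le_ss x i : x i ^+ 2 <= ss x.
Proof.
rewrite /ss (bigD1 i) //= lerDl; apply: sumr_ge0 => j _; exact: sqr_ge0.
Qed.

Lemma le_sqr_nonneg (a b : R) : 0 <= b -> a ^+ 2 <= b ^+ 2 -> `|a| <= b.
Proof.
move=> b0 H; rewrite -(ger0_norm b0); rewrite -ler_sqr ?nnegrE //.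
by rewrite -!normrX !ger0_norm ?sqr_ge0.
Qed.

Lemma coord_le_enorm x i : `|x i| <= enorm x.
Proof. by apply: le_sqr_nonneg; rewrite ?enorm_ge0 // enorm_sqr sqr_le_ss. Qed.

Lemma enorm_lt_sqr x (t : R) : 0 < t -> ss x < t ^+ 2 -> enorm x < t.
Proof.
move=> t0 H; rewrite -(@ltr_pXn2r _ 2%N) ?nnegrE ?enorm_ge0 ?ltW //.
by rewrite enorm_sqr.
Qed.

Lemma sqr_enorm_lt x (t : R) : enorm x < t -> ss x < t ^+ 2.
Proof.
move=> H; have t0 : 0 <= t by apply: le_trans (enorm_ge0 x) (ltW H).
by rewrite -enorm_sqr ltr_pXn2r ?nnegrE ?enorm_ge0.
Qed.

Lemma sqr_enorm_le x (t : R) : enorm x <= t -> ss x <= t ^+ 2.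
Proof.
move=> H; have t0 : 0 <= t by apply: le_trans (enorm_ge0 x) H.
by rewrite -enorm_sqr ler_pXn2r ?nnegrE ?enorm_ge0.
Qed.

Lemma enorm_le_sqr x (t : R) : 0 <= t -> ss x <= t ^+ 2 -> enorm x <= t.
Proof.
move=> t0 H; rewrite -(@ler_pXn2r _ 2%N) ?nnegrE ?enorm_ge0 //.
by rewrite enorm_sqr.
Qed.

Lemma CS x y : dot x y ^+ 2 <= ss x * ss y.
Proof.
set A := ss x; set B := dot x y; set C := ss y.
have C0 : 0 <= C by apply: ss_ge0.
have key : 0 <= C * (A * C - B ^+ 2).
  have -> : C * (A * C - B ^+ 2) = \sum_(i < n) (C * x i - B * y i) ^+ 2.
    have -> : \sum_(i < n) (C * x i - B * y i) ^+ 2 =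
       \sum_(i < n) (C ^+ 2 * x i ^+ 2 - (2 * C * B) * (x i * y i) + B ^+ 2 * y i ^+ 2).
      by apply: eq_bigr => i _; ring.
    rewrite big_split /= sumrB -!mulr_sumr /A /C /B /dot /ss; ring.
  by apply: sumr_ge0 => i _; apply: sqr_ge0.
have [C00|Cpos] := eqVneq C 0.
  have y0 : forall i, y i = 0.
    move=> i; apply/eqP; rewrite -sqrf_eq0 eq_le sqr_ge0 andbT.
    by rewrite -C00 sqr_le_ss.
  have -> : B = 0 by rewrite /B /dot big1 // => i _; rewrite y0 mulr0.
  by rewrite expr0n /= mulr_ge0 // ss_ge0.
have Cp : 0 < C by rewrite lt_def Cpos C0.
rewrite pmulr_rge0 // subr_ge0 in key. exact: key.
Qed.

Lemma dot_le x y : dot x y <= enorm x * enorm y.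
Proof.
have := CS x y; rewrite -!enorm_sqr -exprMn => H.
apply: le_trans (ler_norm _) _; apply: le_sqr_nonneg => //.
by rewrite mulr_ge0 ?enorm_ge0.
Qed.

Lemma ss_add x y : ss (vadd x y) = ss x + 2 * dot x y + ss y.
Proof.
rewrite /ss /vadd /dot mulr_sumr -!big_split /=; apply: eq_bigr => i _; ring.
Qed.

Lemma enorm_triangle x y : enorm (vadd x y) <= enorm x + enorm y.
Proof.
apply: enorm_le_sqr; first by rewrite addr_ge0 ?enorm_ge0.
rewrite ss_add -!enorm_sqr; have := dot_le x y.
rewrite sqrrD; nra.
Qed.


Lemma ss_le_sum x : ss x <= (\sum_(i < n) `|x i|) ^+ 2.
Proof.
rewrite /ss; elim: (index_enum _) => [|j s IH]; first by rewrite !big_nil expr0n.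
rewrite !big_cons; have H0 : 0 <= \sum_(i <- s) `|x i| by apply: sumr_ge0.
have := normr_ge0 (x j); have : x j ^+ 2 = `|x j| ^+ 2 by rewrite real_normK ?num_real.
move=> ->; nra.
Qed.

Lemma enorm_le_sum x : enorm x <= \sum_(i < n) `|x i|.
Proof. by apply: enorm_le_sqr; [apply: sumr_ge0 | apply: ss_le_sum]. Qed.

Lemma dist_ge0 x y : 0 <= dist x y.
Proof. exact: enorm_ge0. Qed.

Lemma dist_sym x y : dist x y = dist y x.
Proof.
by rewrite /dist !enormE /ss; congr Num.sqrt; apply: eq_bigr => i _; rewrite /vsub; ring.
Qed.

Lemma dist_triangle x y z : dist x z <= dist x y + dist y z.
Proof.
rewrite /dist; have -> : enorm (vsub x z) = enorm (vadd (vsub x y) (vsub y z)).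
  by apply: enorm_ext => i; rewrite /vadd /vsub; ring.
exact: enorm_triangle.
Qed.

Lemma coord_le_dist x y i : `|x i - y i| <= dist x y.
Proof. exact: (coord_le_enorm (vsub x y) i). Qed.

Lemma dist_self x : dist x x = 0.
Proof.
by rewrite /dist enormE /ss big1 ?sqrtr0 // => i _; rewrite /vsub subrr expr0n.
Qed.

Lemma dist_sqr x y : dist x y ^+ 2 = ss (vsub x y).
Proof. exact: enorm_sqr. Qed.

End Basics.

Lemma rV_entry_le (R : realType) n (M : 'rV[R]_n) i : `|M ord0 i| <= `|M|.
Proof.
rewrite [leRHS]/Num.norm /= mx_normrE; apply/bigmax_geP; right => /=.
by exists (ord0, i).
Qed.

Section Bridge.
Variables (R : realType) (n : nat).

Definition vo (r : 'rV[R]_n) : vec R n := fun i => r ord0 i.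

Lemma dist_vo (q r : 'rV[R]_n) : dist (vo q) (vo r) <= n%:R * `|q - r|.
Proof.
apply: le_trans (enorm_le_sum _) _.
have -> : n%:R * `|q - r| = \sum_(i < n) `|q - r|.
  by rewrite sumr_const card_ord mulr_natl.
apply: ler_sum => i _.
by rewrite /vsub /vo; have := rV_entry_le (q - r) i; rewrite !mxE.
Qed.

Lemma vo_close (r : 'rV[R]_n) (eps : R) : 0 < eps ->
  exists2 e : R, 0 < e & forall q, ball r e q -> dist (vo q) (vo r) < eps.
Proof.
move=> e0; exists (eps / (n%:R + 1)).
  by rewrite divr_gt0 // ltr_wpDl.
move=> q; rewrite -ball_normE /= => bq.
apply: le_lt_trans (dist_vo q r) _.
have n0 : 0 < n%:R + 1 :> R by rewrite ltr_wpDl.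
rewrite distrC; apply: (@le_lt_trans _ _ (n%:R * (eps / (n%:R + 1)))).
  by rewrite ler_wpM2l // ltW.
rewrite mulrA ltr_pdivrMr // mulrDr mulr1 mulrC ltrDl //.
Qed.

Lemma EVT (S : set (vec R n)) (Z : R) (g : vec R n -> R) :
  S !=set0 -> (forall x, S x -> forall i, 0 <= x i <= Z) ->
  (forall x, clos S x -> S x) -> cont_on S g ->
  exists2 c, S c & forall x, S x -> g x <= g c.
Proof.
move=> [x0 Sx0] Sb Scl gc.
pose ro (x : vec R n) : 'rV[R]_n := \row_i x i.
have voro x : vo (ro x) = x by apply/funext => i; rewrite /vo /ro mxE.
pose T := [set r : 'rV[R]_n | S (vo r)].
have clT : closed T.
  move=> r clr; apply: Scl => eps eps0.
  have [e e0 He] := vo_close r eps0.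
  have nb : nbhs r (ball r e) by apply/nbhs_ballP; exists e.
  have [q [Tq bq]] := clr (ball r e) nb.
  by exists (vo q); split => //; apply: He.
have cT : compact T.
  have cB := (@rV_compact _ n (fun=> `[0, Z]%classic) (fun i => @segment_compact R 0 Z)).
  apply: (subclosed_compact clT cB).
  by move=> r /Sb H i /=; rewrite in_itv /=; apply: H.
have T0 : T !=set0 by exists (ro x0); rewrite /T /= voro.
have cf : {within T, continuous (g \o vo)}.
  apply/subspace_continuousP => r Tr.
  apply/cvgrPdist_lt => e e0.
  rewrite /within; apply/nbhs_ballP.
  have [del del0 Hdel] := gc (vo r) Tr e e0.
  have [e' e'0 He'] := vo_close r del0.
  exists e' => // t /= bt Tt.
  by rewrite distrC; apply: Hdel => //; apply: He'.
have [c /set_mem Tc Hc] := compact_EVT_max T0 cT cf.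
exists (vo c) => // x Sx.
have := Hc (ro x); rewrite /= voro; apply; apply: mem_set; by rewrite /T /= voro.
Qed.

End Bridge.
Section Cont.
Variables (R : realType).

Lemma cont_on_sub n (A S : set (vec R n)) g : S `<=` A -> cont_on A g -> cont_on S g.
Proof.
move=> SA gc x Sx e e0; have [del del0 H] := gc x (SA x Sx) e e0.
by exists del => // y Sy dy; apply: H => //; apply: SA.
Qed.

Lemma cont_on_const n (A : set (vec R n)) c : cont_on A (fun=> c).
Proof. by move=> x _ e e0; exists 1 => // y _ _; rewrite subrr normr0. Qed.

Lemma cont_on_add n (A : set (vec R n)) g h :
  cont_on A g -> cont_on A h -> cont_on A (fun x => g x + h x).
Proof.
move=> gc hc x Ax e e0.
have e20 : 0 < e / 2 by rewrite divr_gt0.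
have [d1 d10 H1] := gc x Ax _ e20; have [d2 d20 H2] := hc x Ax _ e20.
exists (Num.min d1 d2); first by rewrite lt_min d10 d20.
move=> y Ay; rewrite lt_min => /andP[y1 y2].
have := H1 y Ay y1; have := H2 y Ay y2.
have -> : g y + h y - (g x + h x) = (g y - g x) + (h y - h x) by ring.
move=> a b; apply: le_lt_trans (ler_normD _ _) _; lra.
Qed.

Lemma cont_on_scale n (A : set (vec R n)) g c :
  cont_on A g -> cont_on A (fun x => c * g x).
Proof.
move=> gc x Ax e e0.
have c0 : 0 < `|c| + 1 by rewrite ltr_wpDl.
have [del del0 H] := gc x Ax (e / (`|c| + 1)) (divr_gt0 e0 c0).
exists del => // y Ay dy; have := H y Ay dy.
rewrite -mulrBr normrM ltr_pdivlMr // => h.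
apply: le_lt_trans h; rewrite mulrDr mulr1 mulrC lerDl //.
Qed.

Lemma cont_on_comp n m (A : set (vec R n)) (S : set (vec R m)) (L : vec R m -> vec R n)
  (K : R) g : 0 <= K -> (forall p, S p -> A (L p)) ->
  (forall p q, dist (L p) (L q) <= K * dist p q) ->
  cont_on A g -> cont_on S (fun p => g (L p)).
Proof.
move=> K0 SA Lip gc p Sp e e0.
have [del del0 H] := gc (L p) (SA p Sp) e e0.
have K1 : 0 < K + 1 by rewrite ltr_wpDl.
exists (del / (K + 1)); first by rewrite divr_gt0.
move=> q Sq dq; apply: H; first exact: SA.
apply: le_lt_trans (Lip q p) _.
rewrite ltr_pdivlMr // in dq; apply: le_lt_trans dq.
have := dist_ge0 q p; nra.
Qed.

Lemma enorm_rev n (a b : vec R n) : `|enorm a - enorm b| <= dist a b.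
Proof.
have h1 : enorm a <= enorm b + dist a b.
  have -> : enorm a = enorm (vadd b (vsub a b)).
    by apply: enorm_ext => i; rewrite /vadd /vsub; ring.
  exact: enorm_triangle.
have h2 : enorm b <= enorm a + dist a b.
  have -> : enorm b = enorm (vadd a (vsub b a)).
    by apply: enorm_ext => i; rewrite /vadd /vsub; ring.
  rewrite (dist_sym a b); exact: enorm_triangle.
rewrite ler_norml; apply/andP; split; lra.
Qed.

Lemma cont_on_enorm n (A : set (vec R n)) : cont_on A (@enorm R n).
Proof.
move=> x _ e e0; exists e => // y _ dy.
by apply: le_lt_trans (enorm_rev _ _) dy.
Qed.

Lemma cont_on_sqr n (A : set (vec R n)) g :
  cont_on A g -> cont_on A (fun x => g x ^+ 2).
Proof.
move=> gc x Ax e e0.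
set c := 2 * `|g x| + 1.
have c0 : 0 < c by rewrite /c ltr_wpDl // mulr_ge0.
pose e' := Num.min 1 (e / c).
have e'0 : 0 < e' by rewrite lt_min ltr01 divr_gt0.
have [del del0 H] := gc x Ax e' e'0.
exists del => // y Ay dy; have := H y Ay dy => h.
have -> : g y ^+ 2 - g x ^+ 2 = (g y - g x) * (g y - g x + 2 * g x) by ring.
rewrite normrM.
have h1 : `|g y - g x| < 1 by apply: (lt_le_trans h); rewrite ge_min lexx.
have h2 : `|g y - g x| < e / c by apply: (lt_le_trans h); rewrite ge_min lexx orbT.
have h3 : `|g y - g x + 2 * g x| <= c.
  apply: le_trans (ler_normD _ _) _; rewrite normrM ger0_norm // /c; lra.
apply: (@le_lt_trans _ _ (`|g y - g x| * c)); first by rewrite ler_wpM2l.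
by rewrite -ltr_pdivlMr.
Qed.

Lemma dot_abs_le n (c x : vec R n) : `|dot c x| <= enorm c * enorm x.
Proof.
rewrite ler_norml; apply/andP; split; last exact: dot_le.
have := dot_le (fun i => - c i) x.
have -> : dot (fun i => - c i) x = - dot c x.
  by rewrite /dot -sumrN; apply: eq_bigr => i _; ring.
have -> : enorm (fun i => - c i) = enorm c.
  by rewrite !enormE /ss; congr Num.sqrt; apply: eq_bigr => i _; ring.
lra.
Qed.

Lemma dot_sub n (c x y : vec R n) : dot c x - dot c y = dot c (vsub x y).
Proof. by rewrite /dot -sumrB; apply: eq_bigr => i _; rewrite /vsub; ring. Qed.

Lemma cont_on_dot n (A : set (vec R n)) c : cont_on A (dot c).
Proof.
move=> x _ e e0.
have c0 : 0 < enorm c + 1 by rewrite ltr_wpDl ?enorm_ge0.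
exists (e / (enorm c + 1)); first by rewrite divr_gt0.
move=> y _ dy; rewrite dot_sub; apply: le_lt_trans (dot_abs_le _ _) _.
rewrite ltr_pdivlMr // in dy; apply: le_lt_trans dy.
rewrite /dist; have := enorm_ge0 c; have := enorm_ge0 (vsub y x); nra.
Qed.

End Cont.
Lemma le_of_forall (R : realType) (a b : R) : (forall r, 0 < r -> a <= b + r) -> a <= b.
Proof.
move=> H; rewrite leNgt; apply/negP => ba.
have := H ((a - b) / 2); rewrite divr_gt0 // ?subr_gt0 // => /(_ isT); lra.
Qed.

Lemma dist_eq0 (R : realType) n (x y : vec R n) : dist x y = 0 -> forall i, x i = y i.
Proof.
move=> H i; have := coord_le_dist x y i; rewrite H => h.
by apply/eqP; rewrite -subr_eq0 -normr_eq0 eq_le h normr_ge0.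
Qed.

Definition boxB (R : realType) n (Z : R) : set (vec R n) :=
  [set x | forall i, 0 <= x i <= Z].

Lemma clos_box (R : realType) n (Z : R) (S : set (vec R n)) x :
  S `<=` boxB Z -> clos S x -> boxB Z x.
Proof.
move=> SB cl i; apply/andP; split.
- rewrite -oppr_le0; apply: le_of_forall => r r0.
  have [y [Sy dy]] := cl r r0; have := coord_le_dist y x i.
  have /andP[h1 h2] := SB y Sy i; rewrite ler_norml => /andP[a b]; lra.
- apply: le_of_forall => r r0.
  have [y [Sy dy]] := cl r r0; have := coord_le_dist y x i.
  have /andP[h1 h2] := SB y Sy i; rewrite ler_norml => /andP[a b]; lra.
Qed.

Section Pairs.
Variables (R : realType) (d : nat).
Definition pfst (p : vec R (d + d)) : vec R d := fun i => p (lshift d i).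
Definition psnd (p : vec R (d + d)) : vec R d := fun i => p (rshift d i).
Definition pjoin (x y : vec R d) : vec R (d + d) :=
  fun k => match split k with inl i => x i | inr j => y j end.

Lemma pfst_join x y : pfst (pjoin x y) = x.
Proof.
apply/funext => i; rewrite /pfst /pjoin.
by have /= -> := unsplitK (inl i : 'I_d + 'I_d).
Qed.

Lemma psnd_join x y : psnd (pjoin x y) = y.
Proof.
apply/funext => i; rewrite /psnd /pjoin.
by have /= -> := unsplitK (inr i : 'I_d + 'I_d).
Qed.

Lemma ss_split p : ss p = ss (pfst p) + ss (psnd p).
Proof. by rewrite /ss big_split_ord. Qed.

Lemma dist_pfst p q : dist (pfst p) (pfst q) <= dist p q.
Proof.
rewrite /dist !enormE ler_sqrt ?ss_ge0 // (ss_split (vsub p q)).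
have -> : ss (pfst (vsub p q)) = ss (vsub (pfst p) (pfst q)) by [].
by rewrite lerDl ss_ge0.
Qed.

Lemma dist_psnd p q : dist (psnd p) (psnd q) <= dist p q.
Proof.
rewrite /dist !enormE ler_sqrt ?ss_ge0 // (ss_split (vsub p q)).
have -> : ss (psnd (vsub p q)) = ss (vsub (psnd p) (psnd q)) by [].
by rewrite lerDr ss_ge0.
Qed.

Lemma box_join (Z : R) x y : boxB Z x -> boxB Z y -> boxB Z (pjoin x y).
Proof. by move=> bx by_ k; rewrite /pjoin; case: (split k). Qed.

Lemma box_pfst (Z : R) p : boxB Z p -> boxB Z (pfst p).
Proof. by move=> bp i; apply: bp. Qed.

Lemma box_psnd (Z : R) p : boxB Z p -> boxB Z (psnd p).
Proof. by move=> bp i; apply: bp. Qed.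

Lemma dist_diff p q :
  dist (vsub (pfst p) (psnd p)) (vsub (pfst q) (psnd q)) <= 2 * dist p q.
Proof.
have -> : dist (vsub (pfst p) (psnd p)) (vsub (pfst q) (psnd q)) =
  enorm (vadd (vsub (pfst p) (pfst q)) (fun i => - (vsub (psnd p) (psnd q)) i)).
  by apply: enorm_ext => i; rewrite /vadd /vsub; ring.
apply: le_trans (enorm_triangle _ _) _.
have -> : enorm (fun i => - (vsub (psnd p) (psnd q)) i) = dist (psnd p) (psnd q).
  by rewrite /dist !enormE /ss; congr Num.sqrt; apply: eq_bigr => i _; ring.
have := dist_pfst p q; have := dist_psnd p q; rewrite /dist; lra.
Qed.

Lemma heine (u : vec R d -> R) (Z : R) : cont_on (boxB Z) u ->
  forall eta, 0 < eta -> exists2 del, 0 < del & forall x y, boxB Z x -> boxB Z y ->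
    dist x y < del -> `|u x - u y| < eta.
Proof.
move=> uc eta eta0.
pose K := [set p | boxB Z p /\ eta <= `|u (pfst p) - u (psnd p)|].
have inK x y : boxB Z x -> boxB Z y -> eta <= `|u x - u y| -> K (pjoin x y).
  by move=> bx by_ h; split; [apply: box_join | rewrite pfst_join psnd_join].
have [[p0 Kp0]|K0] := pselect (K !=set0); last first.
  exists 1 => // x y bx by_ _; rewrite ltNge; apply/negP => h.
  by apply: K0; exists (pjoin x y); apply: inK.
have Kb : K `<=` boxB Z by move=> p [].
have Kcl : forall p, clos K p -> K p.
  move=> p clp; have bp := clos_box Kb clp; split => //.
  apply: le_of_forall => r r0.
  have r20 : 0 < r / 2 by rewrite divr_gt0.
  have [d1 d10 H1] := uc (pfst p) (box_pfst bp) _ r20.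
  have [d2 d20 H2] := uc (psnd p) (box_psnd bp) _ r20.
  have m0 : 0 < Num.min d1 d2 by rewrite lt_min d10 d20.
  have [q [[bq Kq] dq]] := clp _ m0.
  move: dq; rewrite lt_min => /andP[dq1 dq2].
  have := H1 (pfst q) (box_pfst bq) (le_lt_trans (dist_pfst q p) dq1).
  have := H2 (psnd q) (box_psnd bq) (le_lt_trans (dist_psnd q p) dq2).
  have := ler_normD (u (pfst q) - u (pfst p)) (u (pfst p) - u (psnd p)).
  have := ler_normD (u (pfst q) - u (psnd p)) (u (psnd p) - u (psnd q)).
  have -> : u (pfst q) - u (psnd p) + (u (psnd p) - u (psnd q)) =
            u (pfst q) - u (psnd q) by ring.
  have -> : u (pfst q) - u (pfst p) + (u (pfst p) - u (psnd p)) =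
            u (pfst q) - u (psnd p) by ring.
  rewrite (distrC (u (psnd p))).
  lra.
have gc : cont_on K (fun p => -1 * enorm (vsub (pfst p) (psnd p))).
  apply: cont_on_scale.
  apply: (@cont_on_comp _ d (d + d) setT K (fun p => vsub (pfst p) (psnd p)) 2
    (@enorm R d)) => //; [exact: dist_diff | exact: cont_on_enorm].
have [c Kc Hc] := EVT (ex_intro _ p0 Kp0) Kb Kcl gc.
set del := enorm (vsub (pfst c) (psnd c)).
have del0 : 0 < del.
  rewrite lt_def enorm_ge0 andbT; apply/eqP => h.
  have e := dist_eq0 h; case: Kc => _.
  have -> : pfst c = psnd c by apply/funext.
  by rewrite subrr normr0 leNgt eta0.
exists del => // x y bx by_ dxy; rewrite ltNge; apply/negP => h.
have := Hc _ (inK x y bx by_ h); rewrite pfst_join psnd_join.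
rewrite -/(dist x y) -/del; lra.
Qed.

End Pairs.
Section Usc.
Variables (R : realType) (d : nat).
Implicit Types (g : vec R d -> R) (x : vec R d).

Definition Sr g x (r : R) := [set g y | y in [set y | posorth y /\ dist y x <= r]].

Lemma Sr_sup g x (Lb Gb r : R) : posorth x -> (forall y, posorth y -> Lb <= g y <= Gb) ->
  0 < r -> g x <= sup (Sr g x r).
Proof.
move=> px gb r0; apply: sup_upper_bound.
  split; first by exists (g x), x => //; split => //; rewrite dist_self ltW.
  by exists Gb => _ [y [py _] <-]; have /andP[] := gb y py.
by exists x => //; split => //; rewrite dist_self ltW.
Qed.

Lemma usc_le g x (Lb Gb B r : R) :
  posorth x -> (forall y, posorth y -> Lb <= g y <= Gb) -> 0 < r ->
  (forall y, posorth y -> dist y x <= r -> g y <= B) -> usc_env g x <= B.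
Proof.
move=> px gb r0 HB; rewrite /usc_env.
set E := [set sup _ | r in _].
have hlb : has_lbound E.
  exists Lb => _ [r' r'0 <-]; apply: le_trans (Sr_sup px gb r'0).
  by have /andP[] := gb x px.
apply: le_trans (ge_inf hlb (_ : E (sup (Sr g x r)))) _.
  by exists r.
apply: ge_sup; first by exists (g x), x => //; split => //; rewrite dist_self ltW.
by move=> _ [y [py dy] <-]; apply: HB.
Qed.

Lemma usc_ge g x (Lb Gb : R) :
  posorth x -> (forall y, posorth y -> Lb <= g y <= Gb) -> g x <= usc_env g x.
Proof.
move=> px gb; rewrite /usc_env; apply: lb_le_inf.
  by exists (sup (Sr g x 1)), 1 => //=; rewrite ltr01.
by move=> _ [r' r'0 <-]; apply: (Sr_sup px gb r'0).
Qed.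

End Usc.
Lemma min_le_l (R : realType) (a b : R) : Num.min a b <= a.
Proof. by rewrite ge_min lexx. Qed.
Lemma min_le_r (R : realType) (a b : R) : Num.min a b <= b.
Proof. by rewrite ge_min lexx orbT. Qed.

Section Misc.
Variables (R : realType) (n : nat).
Implicit Types (x y : vec R n).

Lemma prod_add (b : 'I_n -> R) (c : R) : (0 < n)%N -> (forall i, 0 <= b i) -> 0 <= c ->
  \prod_(i < n) b i + \prod_(i < n) c <= \prod_(i < n) (b i + c).
Proof.
move=> n0 b0 c0.
have key : forall j s, \prod_(i <- j :: s) b i + \prod_(i <- j :: s) c <=
   \prod_(i <- j :: s) (b i + c).
  move=> j s; elim: s j => [|k s IH] j; first by rewrite !big_cons !big_nil !mulr1.
  rewrite big_cons [X in _ + X]big_cons [X in _ <= X]big_cons.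
  have := IH k.
  have B0 : 0 <= \prod_(i <- k :: s) b i by apply: prodr_ge0.
  have C0 : 0 <= \prod_(i <- k :: s) c by apply: prodr_ge0.
  have := b0 j; nra.

case E : (index_enum _) => [|j s]; last exact: key.
have : Ordinal n0 \in index_enum 'I_n by rewrite mem_index_enum.
by rewrite E.
Qed.

Lemma sum_single (F : 'I_n -> R) i : (forall j, j != i -> F j = 0) -> \sum_(j < n) F j = F i.
Proof. by move=> H; rewrite (bigD1 i) //= big1 ?addr0 // => j /H. Qed.

Lemma posorth_lb x : posorth x -> exists2 l : R, 0 < l & forall i, l <= x i.
Proof.
move=> px.
suff [l l0 H] : exists2 l : R, 0 < l & forall i, i \in index_enum 'I_n -> l <= x i.
  by exists l => // i; apply: H; rewrite mem_index_enum.
elim: (index_enum _) => [|j s [l l0 H]]; first by exists 1.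
exists (Num.min l (x j)); first by rewrite lt_min l0 px.
move=> i; rewrite in_cons => /orP[/eqP ->|/H h]; rewrite ge_min ?lexx ?orbT //.
by rewrite h.
Qed.

Lemma posorth_near x (l : R) y : (forall i, l <= x i) -> dist y x < l -> posorth y.
Proof.
move=> H dy i; have := coord_le_dist y x i; have := H i.
rewrite ler_norml => h /andP[h1 h2]; lra.
Qed.

Lemma subdiff_mono (v : vec R n -> R) y p0 :
  pareto_monotone v -> posorth y -> subdiff v y p0 -> forall i, 0 <= p0 i.
Proof.
move=> vm py sd i; rewrite leNgt; apply/negP => pneg.
have e0 : 0 < - p0 i / 2 by rewrite divr_gt0 // oppr_gt0.
have [del del0 H] := sd _ e0.
set t := Num.min (del / 2) (y i / 2).
have t0 : 0 < t by rewrite lt_min !divr_gt0 // py.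
have tdel : t < del.
  by apply: (le_lt_trans (min_le_l _ _)); rewrite ltr_pdivrMr // ltr_pMr // ltr1n.
have tyi : t <= y i / 2 by apply: min_le_r.
pose y' : vec R n := fun j => if j == i then y j - t else y j.
have py' : posorth y'.
  move=> j; rewrite /y'; case: eqP => [->|_]; last exact: py.
  have := py i; lra.
have ds : dist y' y = t.
  rewrite /dist enormE /ss (@sum_single _ i); last first.
    by move=> j /negPf ji; rewrite /vsub /y' ji subrr expr0n.
  rewrite /vsub /y' eqxx sqrtr_sqr (_ : y i - t - y i = - t); last by ring.
  by rewrite normrN gtr0_norm.
have dt : dot p0 (vsub y' y) = - (t * p0 i).
  rewrite /dot (@sum_single _ i); last first.
    by move=> j /negPf ji; rewrite /vsub /y' ji subrr mulr0.
  by rewrite /vsub /y' eqxx; ring.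
have := H y' py'; rewrite ds dt => /(_ tdel) h1.
have h2 : v y' <= v y.
  apply: vm; [by move=> j; apply: ltW; apply: py' | by move=> j; apply: ltW; apply: py |].
  by move=> j; rewrite /y'; case: eqP => _ //; lra.
have : 0 < t * (- p0 i / 2) by rewrite mulr_gt0.
move: h1; nra.
Qed.

End Misc.
Section Helpers.
Variables (R : realType) (n : nat).
Implicit Types (x y : vec R n).

Lemma enorm_scale (t : R) x : enorm (vscale t x) = `|t| * enorm x.
Proof.
rewrite !enormE -(sqrtr_sqr t) -sqrtrM ?sqr_ge0 //; congr Num.sqrt.
by rewrite /ss mulr_sumr; apply: eq_bigr => i _; rewrite /vscale; ring.
Qed.

Lemma enorm_zero x : (forall i, x i = 0) -> enorm x = 0.
Proof. by move=> H; rewrite enormE /ss big1 ?sqrtr0 // => i _; rewrite H expr0n. Qed.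

Lemma dist_le_norms x y : dist x y <= enorm x + enorm y.
Proof.
have -> : dist x y = enorm (vadd x (fun i => - y i)).
  by apply: enorm_ext => i; rewrite /vadd /vsub.
apply: le_trans (enorm_triangle _ _) _.
have -> : enorm (fun i => - y i) = enorm y.
  by rewrite !enormE /ss; congr Num.sqrt; apply: eq_bigr => i _; ring.
by [].
Qed.

Lemma vmin_lip x y z : dist (vmin x z) (vmin y z) <= dist x y.
Proof.
rewrite /dist !enormE ler_sqrt ?ss_ge0 //; apply: ler_sum => i _.
rewrite /vsub /vmin /=.
case: (leP (x i) (z i)) => h1; case: (leP (y i) (z i)) => h2; try nra.
by rewrite subrr expr0n /= sqr_ge0.
Qed.

Lemma not_clos (A : set (vec R n)) x : ~ clos A x ->
  exists2 r : R, 0 < r & forall y, A y -> r <= dist y x.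
Proof.
move=> nc; apply: contra_notP nc => H r r0.
apply: contra_notP H => H; exists r => // y Ay; rewrite leNgt; apply/negP => dy.
by apply: H; exists y.
Qed.

Lemma dot_lin (a b h : vec R n) (c1 c2 c3 : R) :
  dot (fun i => c1 * a i + c2 + c3 * b i) h =
  c1 * dot a h + c2 * \sum_(i < n) h i + c3 * dot b h.
Proof.
rewrite /dot !mulr_sumr -!big_split /=; apply: eq_bigr => i _; ring.
Qed.

Lemma cont_on_abs (A : set (vec R n)) g : cont_on A g -> cont_on A (fun x => `|g x|).
Proof.
move=> gc x Ax e e0; have [del del0 H] := gc x Ax e e0.
exists del => // y Ay dy; apply: le_lt_trans (H y Ay dy).
exact: ler_dist_dist.
Qed.

End Helpers.
Section Main.
Variables (R : realType) (d : nat) (Om : set (vec R d))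
    (f : vec R d -> R) (m : R -> R) (u v : vec R d -> R).
Hypotheses (d2 : (2 <= d)%N) (Oopen : is_open Om) (Obdd : is_bounded Om)
  (Opos : Om `<=` posorth (d := d)) (Ocone : cone_condition Om)
  (f0 : forall x, posorth x -> 0 <= f x) (mmod : is_modulus m)
  (fm : forall x y, Om x -> Om y -> `|f x - f y| <= m (dist x y))
  (fout : forall x, posorth x -> ~ Om x -> f x = 0).

Lemma m_mono r s : 0 <= r -> r <= s -> m r <= m s.
Proof. by case: mmod => _ _ H _; apply: H. Qed.

Lemma m_ge0 r : 0 <= r -> 0 <= m r.
Proof. by case: mmod => _ H _ _; apply: H. Qed.

Lemma m_small e : 0 < e -> exists2 rho, 0 < rho & m rho < e.
Proof.
move=> e0; case: mmod => m00 _ _ mc.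
have [del del0 H] := mc 0 (lexx 0) e e0.
exists (del / 2); first by rewrite divr_gt0.
have := H (del / 2); rewrite m00 !subr0 ger0_norm ?divr_ge0 ?ltW //.
move=> /(_ isT); rewrite ltr_pdivrMr // ltr_pMr // ltr1n => /(_ isT) h.
by apply: le_lt_trans h; apply: ler_norm.
Qed.

Lemma f_bounded : exists Fb, forall y, posorth y -> 0 <= f y <= Fb.
Proof.
case: Obdd => M HM.
have [[w0 Ow0]|O0] := pselect (Om !=set0); last first.
  exists 0 => y py; rewrite fout ?lexx // => Oy; apply: O0; by exists y.
have M0 : 0 <= M by apply: le_trans (HM _ Ow0); apply: enorm_ge0.
exists (f w0 + m (M + M)) => y py; rewrite f0 //=.
have fw0 := f0 (Opos Ow0); have mM := m_ge0 (addr_ge0 M0 M0).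
have [Oy|nOy] := pselect (Om y); last by rewrite fout //; apply: addr_ge0.
have := fm Oy Ow0; rewrite ler_norml => /andP[_ h].
have : m (dist y w0) <= m (M + M).
  apply: m_mono; first exact: dist_ge0.
  apply: le_trans (dist_le_norms _ _) _; apply: lerD; exact: HM.
lra.
Qed.

Lemma usc_f_le x (B r : R) : posorth x -> 0 < r ->
  (forall y, posorth y -> dist y x <= r -> f y <= B) -> usc_env f x <= B.
Proof.
move=> px r0 H; have [Fb HF] := f_bounded.
by apply: (usc_le (Lb := 0) (Gb := Fb) px HF r0 H).
Qed.

Lemma lsc_f_ge x (A r : R) : posorth x -> 0 < r ->
  (forall y, posorth y -> dist y x <= r -> A <= f y) -> A <= lsc_env f x.
Proof.
move=> px r0 H; have [Fb HF] := f_bounded.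
rewrite /lsc_env lerNr.
apply: (usc_le (Lb := - Fb) (Gb := 0) px _ r0).
  by move=> y py; have /andP[h1 h2] := HF y py; rewrite lerN2 h2 oppr_le0 h1.
by move=> y py dy; rewrite lerN2; apply: H.
Qed.

Lemma usc_fhat_le (z x : vec R d) (B r : R) : posorth x -> 0 < r -> 0 <= B ->
  (forall y, posorth y -> dist y x <= r + r -> f y <= B) -> usc_env (fhat f z) x <= B.
Proof.
move=> px r0 B0 H; have [Fb HF] := f_bounded.
have Hh : forall y, posorth y -> 0 <= fhat f z y <= Fb.
  move=> y py; rewrite /fhat; case: ifP => _; last by have /andP[] := HF y py; lra.
  apply/andP; split.
    apply: le_trans (usc_ge py HF); by have /andP[] := HF y py.
  apply: (usc_f_le py ltr01) => y' py' _; by have /andP[] := HF y' py'.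
apply: (usc_le (Lb := 0) (Gb := Fb) px Hh r0) => y py dy.
rewrite /fhat; case: ifP => _ //.
apply: (usc_f_le py r0) => y' py' dy'; apply: H => //.
apply: le_trans (dist_triangle y' y x) _; exact: lerD.
Qed.


Lemma sep (xh : vec R d) : exists k0 : vec R d, exists rk : R, exists l0 : R,
  [/\ 0 < rk, 0 < l0 &
   forall (al : R) (x y : vec R d), 0 < al -> dist x xh < l0 -> dist y xh < l0 -> ~ Om y ->
     enorm (vsub (vsub x y) (vscale al k0)) < al * rk ->
     exists2 r : R, 0 < r & forall y', dist y' x <= r -> ~ Om y'].
Proof.
have [Hb|nb] := pselect (bdry Om xh).
  have [K [V [Kc [c [rc rc0 Kc']] [rV rV0 HV] Hcone]]] := Ocone Hb.
  have d0 : (0 < d)%N by apply: leq_trans d2.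
  pose i0 : 'I_d := Ordinal d0.
  pose e0 : vec R d := fun j => if j == i0 then rc / 2 else 0.
  have rc20 : 0 < rc / 2 by rewrite divr_gt0.
  have ne0 : enorm e0 = rc / 2.
    rewrite enormE /ss (@sum_single _ _ _ i0); last first.
      by move=> j /negPf ji; rewrite /e0 ji expr0n.
    by rewrite /e0 eqxx sqrtr_sqr gtr0_norm.
  have ball_ok : forall k, dist k c = rc / 2 -> forall y, dist y k < rc / 2 -> K y.
    move=> k dk y dy; apply: Kc'; apply: (le_lt_trans (dist_triangle y k c)).
    rewrite dk; lra.
  have [k0 [Hk1 Hk2]] : exists k0, (forall y, dist y k0 < rc / 2 -> K y) /\ rc / 2 <= enorm k0.
    pose kp := vadd c e0; pose km := vsub c e0.
    have dkp : dist kp c = rc / 2.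
      by rewrite -ne0; apply: enorm_ext => i; rewrite /vsub /kp /vadd; ring.
    have dkm : dist km c = rc / 2.
      rewrite -ne0 /dist !enormE /ss; congr Num.sqrt; apply: eq_bigr => i _.
      by rewrite /km /vsub /=; ring.
    have hs : rc <= enorm kp + enorm km.
      apply: le_trans (dist_le_norms kp km).
      have -> : dist kp km = enorm (vscale 2 e0).
        by apply: enorm_ext => i; rewrite /kp /km /vsub /vadd /vscale /=; ring.
      by rewrite enorm_scale ne0 ger0_norm //; lra.
    have [h|h] := leP (rc / 2) (enorm kp).
      by exists kp; split => //; apply: ball_ok.
    exists km; split; first by apply: ball_ok.
    lra.
  exists k0, (rc / 2), rV; split => // al x y al0 dx dy ny ha.
  have [cx|ncx] := pselect (clos Om x); last first.
    have [r0 r00 Hr0] := not_clos ncx.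
    exists (r0 / 2); first by rewrite divr_gt0.
    move=> y' dy' Oy'; have := Hr0 _ Oy'; lra.
  exfalso.
  set a := vsub (vsub x y) (vscale al k0) in ha.
  pose kk : vec R d := fun i => k0 i + a i / al.
  have Kkk : K kk.
    apply: Hk1.
    have -> : dist kk k0 = enorm (vscale (al^-1) a).
      by apply: enorm_ext => i; rewrite /vsub /kk /vscale; field; rewrite gt_eqF.
    rewrite enorm_scale ger0_norm ?invr_ge0 ?ltW // mulrC ltr_pdivrMr //.
    by rewrite mulrC.
  have Kxy : K (vsub x y).
    have -> : vsub x y = vscale al kk.
      apply/funext => i; rewrite /vsub /vscale /kk /a /vsub /vscale.
      by field; rewrite gt_eqF.
    by apply: Kc => //; apply: ltW.
  have exy : x = y.
    apply: (Hcone y (HV y dy) ny x) => //; last exact: HV.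
    exists (vsub x y); split => //; apply/funext => i; rewrite /vadd /vsub; ring.
  move: ha; rewrite /a exy.
  have -> : enorm (vsub (vsub y y) (vscale al k0)) = al * enorm k0.
    have -> : enorm (vsub (vsub y y) (vscale al k0)) = enorm (vscale (- al) k0).
      by apply: enorm_ext => i; rewrite /vsub /vscale; ring.
    by rewrite enorm_scale normrN ger0_norm // ltW.
  rewrite ltr_pM2l //; lra.
have [Oxh|nO] := pselect (Om xh).
  have [r0 r00 Hr0] := Oopen Oxh.
  exists (fun=> 0), 1, r0; split => // al x y _ _ dy ny _.
  by exfalso; apply: ny; apply: Hr0.
have ncl : ~ clos Om xh by move=> cl; apply: nb; split.
have [r0 r00 Hr0] := not_clos ncl.
exists (fun=> 0), 1, (r0 / 2); split => //; first by rewrite divr_gt0.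
move=> al x y _ dx _ _ _; exists (r0 / 4); first by rewrite divr_gt0.
move=> y' dy' Oy'; have := Hr0 _ Oy'; have := dist_triangle y' x xh; lra.
Qed.

End Main.

Lemma ss_sub (R : realType) n (a h : vec R n) : ss (vsub a h) = ss a - 2 * dot a h + ss h.
Proof.
rewrite /ss /vsub /dot mulr_sumr -sumrB -big_split /=; apply: eq_bigr => i _; ring.
Qed.

Lemma box_cpos (R : realType) n (Z : R) (x : vec R n) : boxB Z x -> cposorth x.
Proof. by move=> bx i; have /andP[] := bx i. Qed.

Theorem theorem2p10 (R : realType) (d : nat) (Om : set (vec R d))
    (f : vec R d -> R) (m : R -> R) (u v : vec R d -> R) :
  (2 <= d)%N ->
  is_open Om -> is_bounded Om -> Om `<=` posorth (d := d) ->
  cone_condition Om ->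
  (forall x, posorth x -> 0 <= f x) ->
  is_modulus m ->
  (forall x y, Om x -> Om y -> `|f x - f y| <= m (dist x y)) ->
  (forall x, posorth x -> ~ Om x -> f x = 0) ->
  cont_on (cposorth (d := d)) u -> cont_on (cposorth (d := d)) v ->
  visc_sub f u -> visc_super f v ->
  truncatable f u -> pareto_monotone v ->
  (forall x, bdposorth x -> u x <= v x) ->
  forall x, posorth x -> u x <= v x.
Proof.
move=> d2 Oopen Obdd Opos Ocone f0 mmod fm fout uc vc usub vsup utr vmon bd x0.
move=> px0; rewrite leNgt; apply/negP => hlt.
pose th := u x0 - v x0.
have th0 : 0 < th by rewrite subr_gt0.
pose Z := \sum_(i < d) `|x0 i| + 1.
have S0 : 0 <= \sum_(i < d) `|x0 i| by apply: sumr_ge0.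
have Z0 : 0 < Z by rewrite /Z ltr_wpDl.
pose z : vec R d := fun=> Z.
have pz : posorth z by [].
have x0Z : forall i, x0 i <= Z.
  move=> i; apply: le_trans (ler_norm _) _; apply: le_trans (coord_le_enorm _ i) _.
  apply: le_trans (enorm_le_sum _) _; rewrite /Z lerDl //.
pose w := fun x => u (vmin x z).
pose one : vec R d := fun=> 1.
pose E0 := dot one x0.
have E00 : 0 <= E0 by apply: sumr_ge0 => i _; rewrite mul1r ltW.
pose ep := th / (2 * (E0 + 1)).
have ep0 : 0 < ep by rewrite divr_gt0 // mulr_gt0 // ltr_wpDl.
have epE : ep * E0 < th.
  rewrite /ep mulrC mulrA ltr_pdivrMr ?mulr_gt0 ?ltr_wpDl //; nra.
pose g := fun x => w x + (-1) * v x + (- ep) * dot one x.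
have cvmin : forall x, cposorth x -> cposorth (vmin x z).
  by move=> x cx i; rewrite /vmin le_min cx ltW.
have bvmin : forall x, cposorth x -> boxB Z (vmin x z).
  by move=> x cx i; rewrite /vmin le_min cx ltW //= ge_min lexx orbT.
have wc : cont_on (@cposorth R d) w.
  apply: (@cont_on_comp _ d d (@cposorth R d) (@cposorth R d) (fun x => vmin x z) 1) => //.
  by move=> p q; rewrite mul1r; apply: vmin_lip.
have gc : cont_on (boxB Z) g.
  apply: cont_on_add; first apply: cont_on_add.
  - exact: (cont_on_sub (@box_cpos R d Z) wc).
  - by apply: cont_on_scale; exact: (cont_on_sub (@box_cpos R d Z) vc).
  - by apply: cont_on_scale; exact: cont_on_dot.
have [xh Bxh Hxh] : exists2 xh, boxB Z xh & forall x, boxB Z x -> g x <= g xh.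
  apply: (EVT (Z := Z)) => //.
  - by exists x0 => i; rewrite x0Z ltW.
  - by move=> x clx; apply: (@clos_box _ _ Z (boxB Z)).
have vminK : forall x, vmin (vmin x z) z = vmin x z.
  by move=> x; apply/funext => i; rewrite /vmin -minA minxx.
have g_le : forall x, cposorth x -> g x <= g xh.
  move=> x cx; apply: le_trans (Hxh _ (bvmin x cx)).
  rewrite /g /w vminK.
  have h1 : v (vmin x z) <= v x.
    apply: vmon => //; first exact: cvmin.
    by move=> i; rewrite /vmin ge_min lexx.
  have h2 : dot one (vmin x z) <= dot one x.
    by apply: ler_sum => i _; rewrite !mul1r /vmin ge_min lexx.
  have := ep0; nra.
have vx0 : vmin x0 z = x0.
  by apply/funext => i; rewrite /vmin; apply/min_idPl.
have gx0 : 0 < g x0.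
  rewrite /g /w vx0 -/E0; rewrite /th in epE; lra.
have Mpos : 0 < g xh by apply: lt_le_trans gx0 (g_le _ (fun i => ltW (px0 i))).
have cxh : cposorth xh by apply: box_cpos Bxh.
have pxh : posorth xh.
  move=> i; rewrite lt_def (cxh i) andbT; apply/negP => /eqP xi0.
  have bdx : bdposorth xh by split => //; exists i.
  have bdm : bdposorth (vmin xh z).
    split; first exact: cvmin.
    by exists i; rewrite /vmin xi0; apply/min_idPl; apply: ltW.
  have h1 := bd _ bdm.
  have h2 : v (vmin xh z) <= v xh.
    apply: vmon => //; first exact: cvmin.
    by move=> j; rewrite /vmin ge_min lexx.
  have h3 : 0 <= dot one xh by apply: sumr_ge0 => j _; rewrite mul1r cxh.
  move: Mpos; rewrite /g /w; nra.
have [lx lx0 Hlx] := posorth_lb pxh.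
have [k0 [rk [l0 [rk0 l00 Hsep]]]] := sep d2 Oopen Ocone xh.
pose delta := \prod_(i < d) (ep / 2).
have delta0 : 0 < delta by apply: prodr_gt0 => i _; rewrite divr_gt0.
have [rm rm0 Hrm] := m_small mmod (divr_gt0 delta0 (ltr0Sn _ 2)).
pose l := Num.min (Num.min l0 lx) (1/2).
have l0' : 0 < l by rewrite !lt_min l00 lx0 divr_gt0.
have ll0 : l <= l0 by rewrite /l !ge_min lexx.
have llx : l <= lx by rewrite /l !ge_min lexx orbT.
have lh : l <= 1/2 by rewrite /l ge_min lexx orbT.
pose tau := Num.min (Num.min (l/2) (ep/4)) rk.
have tau0 : 0 < tau.
  have h1 : 0 < l / 2 by rewrite divr_gt0.
  have h2 : 0 < ep / 4 by rewrite divr_gt0.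
  by rewrite !lt_min h1 h2 rk0.
have taul : tau <= l/2 by rewrite /tau !ge_min lexx.
have tauep : tau <= ep/4 by rewrite /tau !ge_min lexx orbT.
have taurk : tau <= rk by rewrite /tau ge_min lexx orbT.
pose eta := tau ^+ 2 / 4.
have eta0 : 0 < eta by rewrite divr_gt0 // exprn_gt0.
have uB : cont_on (boxB Z) u := cont_on_sub (@box_cpos R d Z) uc.
have [du du0 Hdu] := heine uB eta0.
have [dw dw0 Hdw] := wc xh cxh eta eta0.
have [Wu HWu] : exists Wu, forall x, cposorth x -> `|w x| <= Wu.
  have [c Bc Hc] : exists2 c, boxB Z c & forall x, boxB Z x -> `|u x| <= `|u c|.
    apply: (EVT (Z := Z) (g := fun x => `|u x|)) => //.
    - by exists x0 => i; rewrite x0Z ltW.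
    - by move=> x clx; apply: (@clos_box _ _ Z (boxB Z)).
    - exact: cont_on_abs.
  by exists `|u c| => x cx; apply: Hc; apply: bvmin.
have Wu0 : 0 <= Wu by apply: le_trans (HWu _ cxh).
pose C1 := 4 * Wu + 1 + enorm k0.
have C10 : 0 < C1 by rewrite /C1 ltr_wpDr ?enorm_ge0 // ltr_wpDl // mulr_ge0.
pose m1 := Num.min (Num.min (Num.min du (l/2)) (Num.min (rm/2) dw)) (Num.min lx (1/2)).
have m10 : 0 < m1 by rewrite !lt_min du0 dw0 lx0 !divr_gt0.
have m1du : m1 <= du by rewrite /m1 !ge_min lexx.
have m1l : m1 <= l/2 by rewrite /m1 !ge_min lexx !orbT.
have m1rm : m1 <= rm/2 by rewrite /m1 !ge_min lexx !orbT.
have m1dw : m1 <= dw by rewrite /m1 !ge_min lexx !orbT.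
have m1lx : m1 <= lx by rewrite /m1 !ge_min lexx !orbT.
have m1h : m1 <= 1/2 by rewrite /m1 !ge_min lexx !orbT.
pose al := m1 / (C1 + 1).
have al0 : 0 < al by rewrite divr_gt0 // ltr_wpDl // ltW.
have alC1 : al * C1 < m1.
  rewrite /al mulrC mulrA ltr_pdivrMr ?ltr_wpDl ?ltW //; nra.
have alk0 : al * enorm k0 < m1.
  apply: le_lt_trans alC1; rewrite ler_pM2l // /C1 lerDr; nra.
pose N := (al ^+ 2)^-1.
have N0 : 0 < N by rewrite invr_gt0 exprn_gt0.
have Nal : N * al ^+ 2 = 1 by rewrite mulVf // expf_neq0 // gt_eqF.
pose s := vscale al k0.
have ns : enorm s = al * enorm k0 by rewrite enorm_scale ger0_norm // ltW.
pose Z' := Z + 1.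
pose Phi := fun p : vec R (d + d) =>
  w (pfst p) + (-1) * v (psnd p) + (- ep) * dot one (psnd p)
  + (- N) * enorm (vsub (vsub (pfst p) (psnd p)) s) ^+ 2
  + (-1) * enorm (vsub (psnd p) xh) ^+ 2.
have bZ' : boxB Z' `<=` @cposorth R (d + d) by move=> p; apply: box_cpos.
have Phic : cont_on (boxB Z') Phi.
  have fstc : forall h, cont_on (@cposorth R d) h -> cont_on (boxB Z') (fun p => h (pfst p)).
    move=> h hc; apply: (@cont_on_comp _ d (d + d) (@cposorth R d) (boxB Z') (@pfst R d) 1) => //.
    - by move=> p /box_pfst /box_cpos.
    - by move=> p q; rewrite mul1r dist_pfst.
  have sndc : forall h, cont_on (@cposorth R d) h -> cont_on (boxB Z') (fun p => h (psnd p)).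
    move=> h hc; apply: (@cont_on_comp _ d (d + d) (@cposorth R d) (boxB Z') (@psnd R d) 1) => //.
    - by move=> p /box_psnd /box_cpos.
    - by move=> p q; rewrite mul1r dist_psnd.
  apply: cont_on_add; first apply: cont_on_add; first apply: cont_on_add; first apply: cont_on_add.
  - exact: fstc.
  - by apply: cont_on_scale; apply: sndc.
  - by apply: cont_on_scale; apply: sndc; apply: cont_on_dot.
  - apply: cont_on_scale; apply: cont_on_sqr.
    apply: (@cont_on_comp _ d (d + d) setT (boxB Z') (fun p => vsub (vsub (pfst p) (psnd p)) s) 2) => //.
    + move=> p q; apply: le_trans (dist_diff p q).
      by rewrite le_eqVlt; apply/orP; left; apply/eqP; apply: enorm_ext => i; rewrite /vsub; ring.
    + exact: cont_on_enorm.
  - apply: cont_on_scale; apply: cont_on_sqr.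
    apply: (@cont_on_comp _ d (d + d) setT (boxB Z') (fun p => vsub (psnd p) xh) 1) => //.
    + move=> p q; rewrite mul1r; apply: le_trans (dist_psnd p q).
      by rewrite le_eqVlt; apply/orP; left; apply/eqP; apply: enorm_ext => i; rewrite /vsub; ring.
    + exact: cont_on_enorm.
have BZ'xh : boxB Z' xh.
  by move=> i; have /andP[h1 h2] := Bxh i; rewrite h1 /Z'; lra.
have [ps Bps Hps] : exists2 ps, boxB Z' ps & forall p, boxB Z' p -> Phi p <= Phi ps.
  apply: (EVT (Z := Z')) => //.
  - by exists (pjoin xh xh); apply: box_join.
  - by move=> x clx; apply: (@clos_box _ _ Z' (boxB Z')).
clearbody th E0 ep l tau m1 al N.
clear Hxh gc Phic wc uB hlt x0Z vminK gx0 S0 bZ' usub uc vc bd Ocone.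
pose xa := pfst ps; pose ya := psnd ps.
pose a := vsub (vsub xa ya) s; pose b := vsub ya xh.
have cxa : cposorth xa by apply: box_cpos (box_pfst Bps).
have cya : cposorth ya by apply: box_cpos (box_psnd Bps).
pose xs := vadd xh s.
have sle : forall i, `|s i| <= al * enorm k0 by move=> i; rewrite -ns coord_le_enorm.
have Bxs : boxB Z' xs.
  move=> i; have := sle i; rewrite ler_norml => /andP[h3 h4].
  have h5 := Hlx i; have /andP[h1 h2] := Bxh i.
  rewrite /xs /vadd /Z'; clear -h1 h2 h3 h4 h5 alk0 m1lx m1h; apply/andP; split; lra.
have cxs : cposorth xs by apply: box_cpos Bxs.
have dxs : dist xs xh = al * enorm k0.
  by rewrite -ns; apply: enorm_ext => i; rewrite /xs /vsub /vadd; ring.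
have I1 : Phi (pjoin xs xh) <= Phi ps by apply: Hps; apply: box_join.
have Phij : Phi (pjoin xs xh) = w xs - v xh - ep * dot one xh.
  rewrite /Phi pfst_join psnd_join.
  rewrite (@enorm_zero _ _ (vsub (vsub xs xh) s)); last first.
    by move=> i; rewrite /xs /vsub /vadd; ring.
  rewrite (@enorm_zero _ _ (vsub xh xh)); last by move=> i; rewrite /vsub subrr.
  rewrite expr0n /=; ring.
have Phips : Phi ps = w xa - v ya - ep * dot one ya - N * ss a - ss b.
  by rewrite /Phi -/xa -/ya -/a -/b !enorm_sqr; ring.
have gya := g_le _ cya.
have T1 : N * ss a + ss b <= (w xa - w ya) + (w xh - w xs).
  move: I1 gya; rewrite Phij Phips /g.
  move: (w xa) (w ya) (w xh) (w xs) (v ya) (v xh) (dot one ya) (dot one xh) (N * ss a) (ss b).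
  clear; move=> *; lra.
have wxa := HWu _ cxa; have wya := HWu _ cya; have wxh := HWu _ cxh; have wxs := HWu _ cxs.
have ssa0 := ss_ge0 a; have ssb0 := ss_ge0 b.
have Na : N * ss a <= 4 * Wu.
  move: wxa wya wxh wxs T1 ssb0; move: (w xa) (w ya) (w xh) (w xs) (N * ss a) (ss b).
  clear; move=> ? ? ? ? ? ?; rewrite !ler_norml => /andP[? ?] /andP[? ?] /andP[? ?] /andP[? ?].
  move=> *; lra.
have ea : enorm a <= (4 * Wu + 1) * al.
  apply: enorm_le_sqr; first by apply: mulr_ge0; [clear -Wu0; lra | exact: ltW].
  have : ss a <= 4 * Wu * al ^+ 2.
    have := ler_wpM2r (ltW (exprn_gt0 2 al0)) Na.
    by rewrite mulrAC Nal mul1r.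
  have := exprn_gt0 2 al0; rewrite exprMn; move: (al ^+ 2) (ss a); clear -Wu0.
  move=> x y *; nra.
have dxy : dist xa ya < m1.
  have -> : dist xa ya = enorm (vadd a s).
    by apply: enorm_ext => i; rewrite /a /vadd /vsub; ring.
  apply: le_lt_trans (enorm_triangle _ _) _; rewrite ns.
  apply: le_lt_trans alC1; rewrite /C1; move: ea; clear; move=> *; nra.
have hw1 : `|w xa - w ya| < eta.
  apply: Hdu; try apply: bvmin => //.
  by apply: le_lt_trans (vmin_lip _ _ _) (lt_le_trans dxy m1du).
have hw2 : `|w xs - w xh| < eta.
  by apply: Hdw => //; rewrite dxs; apply: lt_le_trans alk0 m1dw.
have T2 : N * ss a + ss b < tau ^+ 2 / 2.
  move: hw1 hw2 T1; rewrite /eta; move: (w xa) (w ya) (w xh) (w xs) (N * ss a) (ss b) (tau ^+ 2).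
  clear; move=> ? ? ? ? ? ? ?; rewrite !ltr_norml => /andP[? ?] /andP[? ?] *; lra.
have db : dist ya xh < tau.
  apply: enorm_lt_sqr => //; rewrite -/b.
  have h : 0 <= N * ss a by rewrite mulr_ge0 // ltW.
  move: h T2 (exprn_gt0 2 tau0); move: (N * ss a) (ss b) (tau ^+ 2); clear.
  move=> *; lra.
have ea2 : enorm a < tau * al.
  apply: enorm_lt_sqr; first by rewrite mulr_gt0.
  have h : N * ss a < tau ^+ 2.
    move: T2 (exprn_gt0 2 tau0) ssb0; move: (N * ss a) (ss b) (tau ^+ 2); clear.
    move=> *; lra.
  have h2 : N * ss a * al ^+ 2 < tau ^+ 2 * al ^+ 2 by rewrite ltr_pM2r ?exprn_gt0.
  rewrite exprMn; apply: le_lt_trans h2; rewrite -mulrA (mulrC (ss a)) mulrA Nal mul1r.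
  exact: lexx.
have dxah : dist xa xh < l.
  apply: le_lt_trans (dist_triangle xa ya xh) _.
  move: dxy db m1l taul; move: (dist xa ya) (dist ya xh); clear; move=> *; lra.
have dyah : dist ya xh < l by move: db taul l0'; clear; move=> *; lra.
have pxa : posorth xa by apply: posorth_near (fun i => le_trans llx (Hlx i)) dxah.
have pya : posorth ya by apply: posorth_near (fun i => le_trans llx (Hlx i)) dyah.
have locB : forall x, posorth x -> dist x xh < 3/4 -> boxB Z' x.
  move=> x px dx i; have := coord_le_dist x xh i; have /andP[h1 h2] := Bxh i.
  rewrite ler_norml /Z' => /andP[h3 h4]; rewrite ltW ?px //=.
  move: h2 h4 dx; clear; move=> *; lra.
have lloc : forall x, dist x xh < l + 1/4 -> dist x xh < 3/4.
  by move=> x; move: lh; clear; move=> *; lra.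
pose p : vec R d := fun i => 2 * N * a i.
have sdw : superdiff w xa p.
  move=> eps eps0; exists (Num.min (1/4) (eps / N)).
    by rewrite lt_min divr_gt0 // divr_gt0.
  move=> x px; rewrite lt_min => /andP[dx1 dx2].
  have Bx : boxB Z' (pjoin x ya).
    apply: box_join; last exact: box_psnd.
    apply: locB => //; apply: lloc; apply: le_lt_trans (dist_triangle x xa xh) _.
    by move: dx1 dxah; clear; move=> *; lra.
  have := Hps _ Bx; rewrite Phips /Phi pfst_join psnd_join -/b enorm_sqr.
  have -> : ss (vsub (vsub x ya) s) = ss (vadd a (vsub x xa)).
    by apply: ss_ext => i; rewrite /a /vadd /vsub; ring.
  rewrite ss_add -dist_sqr.
  have -> : dot p (vsub x xa) = 2 * N * dot a (vsub x xa).
    by rewrite /dot /p mulr_sumr; apply: eq_bigr => i _; ring.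
  have hd : N * dist x xa <= eps.
    by rewrite mulrC -ler_pdivlMr // ltW.
  have h0 := dist_ge0 x xa.
  move=> hin; rewrite enorm_sqr in hin; clear -hin hd h0; nra.
have supu : \prod_(i < d) p i <= usc_env (fhat f z) xa := utr z pz xa p pxa sdw.
pose p0 : vec R d := fun i => 2 * N * a i + (- ep) + (-2) * b i.
have sdv : subdiff v ya p0.
  move=> eps eps0; exists (Num.min (1/4) (eps / (N + 1))).
    by rewrite lt_min divr_gt0 // divr_gt0 // ltr_wpDl // ltW.
  move=> y py; rewrite lt_min => /andP[dy1 dy2].
  have By : boxB Z' (pjoin xa y).
    apply: box_join; first exact: box_pfst.
    apply: locB => //; apply: lloc; apply: le_lt_trans (dist_triangle y ya xh) _.
    by move: dy1 dyah; clear; move=> *; lra.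
  have := Hps _ By; rewrite Phips /Phi pfst_join psnd_join -/xa !enorm_sqr.
  have -> : ss (vsub (vsub xa y) s) = ss (vsub a (vsub y ya)).
    by apply: ss_ext => i; rewrite /a /vsub; ring.
  have -> : ss (vsub y xh) = ss (vadd b (vsub y ya)).
    by apply: ss_ext => i; rewrite /b /vadd /vsub; ring.
  have -> : dot one y = dot one ya + \sum_(i < d) (vsub y ya) i.
    rewrite -[dot one y](subrK (dot one ya)) dot_sub addrC; congr (_ + _).
    by apply: eq_bigr => i _; rewrite mul1r.
  rewrite ss_add ss_sub -dist_sqr /p0 dot_lin.
  have hd : (N + 1) * dist y ya <= eps.
    by rewrite mulrC -ler_pdivlMr ?ltr_wpDl ?ltW.
  have h0 := dist_ge0 y ya.
  move=> hin; clear -hin hd h0; nra.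
have lscv : lsc_env f ya <= \prod_(i < d) p0 i := vsup ya p0 pya sdv.
have p0pos := subdiff_mono vmon pya sdv.
have pp0 : forall i, 0 <= p0 i + ep / 2 <= p i.
  move=> i; have hp := p0pos i; rewrite /p0 in hp; have hb := coord_le_enorm b i.
  have : `|b i| < ep / 4 by apply: le_lt_trans hb (lt_le_trans db tauep).
  rewrite ltr_norml /p /p0 => /andP[h1 h2]; clear -hp h1 h2 ep0.
  apply/andP; split; lra.
have prodp : \prod_(i < d) p0 i + delta <= \prod_(i < d) p i.
  have d0 : (0 < d)%N by apply: leq_trans d2.
  have h1 := @prod_add R d p0 (ep / 2) d0 p0pos (ltW (divr_gt0 ep0 (ltr0Sn _ 1))).
  have h2 : \prod_(i < d) (p0 i + ep / 2) <= \prod_(i < d) p i.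
    by apply: ler_prod => i _; apply: pp0.
  by rewrite /delta; apply: le_trans h1 h2.
have KEY : lsc_env f ya + delta <= usc_env (fhat f z) xa.
  apply: le_trans supu; apply: le_trans prodp; move: lscv; clear; move=> *; lra.
have d30 : 0 < delta / 3 by rewrite divr_gt0.
have [Oya|nOya] := pselect (Om ya).
  have [r0 r00 Hr0] := Oopen ya Oya.
  have fya0 := f0 ya pya.
  have lsc1 : f ya - delta / 3 <= lsc_env f ya.
    have rr0 : 0 < Num.min (r0 / 2) rm.
      have h : 0 < r0 / 2 by rewrite divr_gt0.
      by rewrite lt_min h rm0.
    apply: (lsc_f_ge Obdd Opos f0 mmod fm fout pya rr0) => y py dy.
    have dyr : dist y ya <= rm by apply: le_trans dy (min_le_r _ _).
    have dyr0 : dist y ya < r0.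
      apply: le_lt_trans dy _; apply: le_lt_trans (min_le_l _ _) _.
      by rewrite ltr_pdivrMr // ltr_pMr // ltr1n.
    have Oy : Om y := Hr0 y dyr0.
    have h1 := fm y ya Oy Oya; have h2 := m_mono mmod (dist_ge0 y ya) dyr.
    move: h1 h2 Hrm; rewrite ler_norml => /andP[h1 h1'] h2 h3.
    clear -h1 h1' h2 h3; lra.
  have usc1 : usc_env (fhat f z) xa <= f ya + delta / 3.
    have r8 : 0 < rm / 8 by rewrite divr_gt0.
    have B0 : 0 <= f ya + delta / 3 by move: fya0 d30; clear; move=> *; lra.
    apply: (usc_fhat_le Obdd Opos f0 mmod fm fout z pxa r8 B0) => y py dy.
    have [Oy|nOy] := pselect (Om y); last by rewrite fout.
    have dyr : dist y ya <= rm.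
      apply: le_trans (dist_triangle y xa ya) _.
      move: dy dxy m1rm rm0; move: (dist y xa) (dist xa ya); clear; move=> *; lra.
    have h1 := fm y ya Oy Oya; have h2 := m_mono mmod (dist_ge0 y ya) dyr.
    move: h1 h2 Hrm; rewrite ler_norml => /andP[h1 h1'] h2 h3.
    clear -h1 h1' h2 h3; lra.
  move: KEY lsc1 usc1 d30; clear; move=> *; lra.
have tr : tau * al <= al * rk by rewrite mulrC ler_pM2l.
have [r r0 Hr] := Hsep al xa ya al0 (lt_le_trans dxah ll0) (lt_le_trans dyah ll0) nOya
  (lt_le_trans ea2 tr).
have usc2 : usc_env (fhat f z) xa <= 0.
  have r2 : 0 < r / 2 by rewrite divr_gt0.
  apply: (usc_fhat_le Obdd Opos f0 mmod fm fout z pxa r2 (lexx 0)) => y py dy.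
  rewrite fout // ?lexx //; apply: Hr; apply: le_trans dy _.
  by rewrite -splitr lexx.
have lsc2 : 0 <= lsc_env f ya.
  by apply: (lsc_f_ge Obdd Opos f0 mmod fm fout pya ltr01) => y py _; apply: f0.
move: KEY usc2 lsc2 d30; clear; move=> *; lra.
Qed.
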